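(* Let $p$ be a prime with $p\equiv 1\pmod 4$, let $a$ be a generator of $\mathbb{F}_p^*$, let $k=\frac{p-1}{4}$, $\theta=\exp\!\left(\frac{2\pi i}{p-1}\right)$ and $\eta=\exp\!\left(\frac{2\pi i}{p}\right)$. For $0\le x<p$ define $\varphi_x\in\mathcal{H}=\mathbb{C}(\mathbb{F}_p)$ by $$\varphi_x(n)=\begin{cases}\dfrac{1}{\sqrt{p}}\,\eta^{2^{-1}a^k n^2}, & x=0,\\[2mm] \dfrac{1}{\sqrt{p(p-1)}}\displaystyle\sum_{j=1}^{p-1}\theta^{x\log_a j}\,\eta^{a^k(j-n)^2-2^{-1}a^k n^2}, & 0<x<p,\end{cases}\qquad n\in\mathbb{F}_p.$$ Then $\Phi_p=\{\varphi_x:0\le x<p\}$ is an orthonormal basis of $\mathcal{H}$ and each $\varphi_x$ is an eigenvector of the discrete Fourier transform $F$.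
   Context: $\mathcal{H}=\mathbb{C}(\mathbb{F}_p)$ is the Hilbert space of functions $\mathbb{F}_p\to\mathbb{C}$ with the standard inner product $\langle\varphi,\psi\rangle=\sum_{n\in\mathbb{F}_p}\varphi(n)\overline{\psi(n)}$. The discrete Fourier transform is the operator $F[\varphi](m)=\frac{1}{\sqrt{p}}\sum_{n\in\mathbb{F}_p}\eta^{mn}\varphi(n)$. Exponents of $\eta$ are computed in $\mathbb{F}_p$ (with $2^{-1}$ the inverse of $2$ in $\mathbb{F}_p$ and $a^k\in\mathbb{F}_p$); for $j\in\mathbb{F}_p^*$, $\log_a j$ is the unique $m\in\{0,\dots,p-2\}$ with $a^m=j$. *)

(* Defs.v *)
From mathcomp Require Import all_boot all_algebra.
From mathcomp Require Import reals trigo.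
From mathcomp Require Import complex.
Import GRing.Theory Num.Theory.

Set Implicit Arguments.
Unset Strict Implicit.
Unset Printing Implicit Defensive.

Local Open Scope ring_scope.
Local Open Scope complex_scope.

Section Defs.
Variable R : realType.
Local Notation C := R[i].

Definition expi (t : R) : C := cos t +i* sin t.

Definition eta_ (p : nat) : C := expi (2 * pi / p%:R).
Definition theta_ (p : nat) : C := expi (2 * pi / (p.-1)%:R).

(* eta^e for an exponent e computed in F_p (well defined since eta^p = 1) *)
Definition etaF (p : nat) (e : 'F_p) : C := eta_ p ^+ (val e).

Definition dlog (p : nat) (a j : 'F_p) : nat :=
  find (fun m => a ^+ m == j) (iota 0 p.-1).

Definition sqrtn (n : nat) : C := (Num.sqrt (n%:R : R))%:C.

Definition phi (p : nat) (a : 'F_p) (x : 'I_p) (n : 'F_p) : C :=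
  let k := (p.-1 %/ 4)%N in
  let ak := a ^+ k in
  let h := (2%:R : 'F_p)^-1 in
  if (x == 0 :> nat) then (sqrtn p)^-1 * etaF (h * ak * n ^+ 2)
  else (sqrtn (p * p.-1))^-1 *
       \sum_(j : 'F_p | j != 0)
          theta_ p ^+ (x * dlog a j)%N * etaF (ak * (j - n) ^+ 2 - h * ak * n ^+ 2).

Definition inner (p : nat) (f g : 'F_p -> C) : C := \sum_(n : 'F_p) f n * (g n)^*.

Definition DFT (p : nat) (f : 'F_p -> C) : 'F_p -> C :=
  fun m => (sqrtn p)^-1 * \sum_(n : 'F_p) etaF (m * n) * f n.

End Defs.

(* Main.v *)
Require Import Defs.
From mathcomp Require Import all_boot all_order all_algebra all_field.
From mathcomp Require Import reals trigo.
From mathcomp Require Import complex.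
From mathcomp Require Import ring lra zify.
From Stdlib Require Import FunctionalExtensionality.
Import Order.TTheory GRing.Theory Num.Theory.
Local Open Scope ring_scope.
Local Open Scope complex_scope.

Section Expi.
Variable R : realType.
Local Notation C := R[i].

Lemma expiD (s t : R) : expi (s + t) = expi s * expi t.
Proof.
rewrite /expi cosD sinD; apply/eqP; rewrite eq_complex /=; apply/andP; split; apply/eqP; ring.
Qed.

Lemma expi0 : expi (0:R) = 1.
Proof. by rewrite /expi cos0 sin0. Qed.

Lemma expiX (t : R) (n : nat) : expi t ^+ n = expi (t *+ n).
Proof.
elim: n => [|n IH]; first by rewrite expr0 mulr0n expi0.
by rewrite exprS IH mulrS expiD.
Qed.

Lemma expi2pi : expi (pi *+ 2 : R) = 1.
Proof. by rewrite /expi cos2pi sin2pi. Qed.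

Lemma expi_neq1 (t : R) : 0 < t < pi *+ 2 -> expi t != 1.
Proof.
move=> /andP[t0 t2]; apply/negP => /eqP/eqP; rewrite eq_complex /= => /andP[/eqP c1 /eqP s0].
have [tpi|tpi|tpi] := ltgtP t pi.
- by have := sin_gt0_pi (x:=t); rewrite t0 tpi s0 ltxx => /(_ isT).
- have h : 0 < t - pi < pi by rewrite subr_gt0 tpi /= ltrBlDr -mulr2n.
  move: s0; rewrite -[t](subrK pi) sinDpi => /eqP; rewrite oppr_eq0 => /eqP s0.
  by have := sin_gt0_pi h; rewrite s0 ltxx.
- by move: c1; rewrite tpi cospi => h; lra.
Qed.

Lemma expi_prim (n : nat) : (0 < n)%N -> n.-primitive_root (expi ((pi : R) *+ 2 / n%:R)).
Proof.
move=> n0.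
have n0R : n%:R != 0 :> R by rewrite pnatr_eq0 -lt0n.
have zn : expi ((pi : R) *+ 2 / n%:R) ^+ n = 1.
  by rewrite expiX -[_ *+ n]mulr_natr divfK // expi2pi.
have [m pm mn] := prim_order_exists n0 zn.
have m0 := prim_order_gt0 pm.
have : (m == n) || (m < n)%N by rewrite -leq_eqVlt dvdn_leq.
case/orP => [/eqP mE| mlt]; first by move: pm; rewrite mE.
have pi2 : 0 < pi *+ 2 :> R by rewrite pmulrn_rgt0 // pi_gt0.
have H : 0 < ((pi : R) *+ 2 / n%:R) *+ m < (pi : R) *+ 2.
  rewrite -[_ *+ m]mulr_natr; apply/andP; split.
    by rewrite mulr_gt0 // ?divr_gt0 // ltr0n.
  by rewrite -mulrA gtr_pMr // mulrC ltr_pdivrMr ?ltr0n // mul1r ltr_nat.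
by have := prim_expr_order pm; rewrite expiX => /eqP; rewrite (negbTE (expi_neq1 _ H)).
Qed.

Lemma expi_conj (t : R) : Num.conj (expi t) = expi (- t).
Proof. by rewrite /expi cosN sinN. Qed.

Lemma expi_conjX (t : R) n : (expi t ^+ n)^* * expi t ^+ n = 1.
Proof. by rewrite expiX expi_conj -expiD addNr expi0. Qed.

Lemma expi_neq0 (t : R) n : expi t ^+ n != 0.
Proof. by apply/negP => /eqP h; have := expi_conjX t n; rewrite h mulr0 => /eqP; rewrite eq_sym oner_eq0. Qed.

Lemma sum_prim (n : nat) (z : C) (e : nat) : n.-primitive_root z ->
  \sum_(m < n) z ^+ (e * m) = if (n %| e)%N then n%:R else 0.
Proof.
move=> pz; have n0 := prim_order_gt0 pz.
case: ifP => [de|nde].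
  rewrite (eq_bigr (fun _ => 1)) ?sumr_const ?card_ord // => m _.
  by rewrite exprM; move: de; rewrite (prim_order_dvd pz) => /eqP ->; rewrite expr1n.
under eq_bigr do rewrite exprM.
have w1 : z ^+ e - 1 != 0 by rewrite subr_eq0 -(prim_order_dvd pz) nde.
apply: (mulfI w1); rewrite -subrX1 mulr0 -exprM mulnC exprM (prim_expr_order pz) expr1n subrr //.
Qed.
End Expi.

Section Consts.
Variable R : realType.
Local Notation C := R[i].

Lemma conjV (x : C) : Num.conj (x^-1) = (Num.conj x)^-1.
Proof. exact: fmorphV. Qed.
Lemma conjM (x y : C) : Num.conj (x * y) = Num.conj x * Num.conj y.
Proof. exact: rmorphM. Qed.
Lemma conjX (x : C) n : Num.conj (x ^+ n) = (Num.conj x) ^+ n.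
Proof. exact: rmorphXn. Qed.
Lemma conj_sum (I : finType) (P : pred I) (F : I -> C) :
  Num.conj (\sum_(i | P i) F i) = \sum_(i | P i) Num.conj (F i).
Proof. exact: rmorph_sum. Qed.
Lemma conjK (x : C) : Num.conj (Num.conj x) = x.
Proof. exact: conjCK. Qed.

Lemma sqrtn_conj n : Num.conj (sqrtn R n) = sqrtn R n.
Proof. by rewrite conj_Creal // /sqrtn complex_real. Qed.

Lemma sqrtn_sq n : sqrtn R n * sqrtn R n = n%:R.
Proof. by rewrite /sqrtn -rmorphM -expr2 sqr_sqrtr ?ler0n // rmorph_nat. Qed.

Lemma sqrtn_neq0 n : (0 < n)%N -> sqrtn R n != 0.
Proof.
move=> n0; apply/negP => /eqP h; have := sqrtn_sq n; rewrite h mul0r => /eqP; clear h.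
by rewrite eq_sym pnatr_eq0; move/eqP => n00; rewrite n00 in n0.
Qed.

Lemma Kconj n : (0 < n)%N -> (sqrtn R n)^-1 * Num.conj ((sqrtn R n)^-1) = n%:R^-1.
Proof. by move=> n0; rewrite conjV sqrtn_conj -invfM sqrtn_sq. Qed.
End Consts.

Section Fp.
Variable R : realType.
Variable p : nat.
Hypothesis pr : prime p.
Hypothesis p4 : (p %% 4 = 1)%N.
Variable a : 'F_p.
Hypothesis pa : (p.-1).-primitive_root a.
Local Notation C := R[i].
Local Notation eF := (@etaF R p).
Local Notation c := (a ^+ (p.-1 %/ 4)).
Local Notation h := ((2%:R : 'F_p)^-1).
Local Notation th := (theta_ R p).
Local Notation K := ((sqrtn R (p * p.-1))^-1).
Local Notation K0 := ((sqrtn R p)^-1).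
Local Notation E j n := (c * (j - n) ^+ 2 - h * c * n ^+ 2).

Lemma p_gt4 : (4 < p)%N.
Proof. have := prime_gt1 pr; lia. Qed.

Lemma eta_prim : p.-primitive_root (eta_ R p).
Proof. by rewrite /eta_ mulr_natl; apply: expi_prim; rewrite prime_gt0. Qed.

Lemma theta_prim : (p.-1).-primitive_root (theta_ R p).
Proof. by rewrite /theta_ mulr_natl; apply: expi_prim; have := p_gt4; lia. Qed.

Lemma Fp_lt (x : 'F_p) : (val x < p)%N.
Proof. by have := ltn_ord x; rewrite [in X in (_ < X)%N -> _]Fp_cast. Qed.

Lemma Fp_val (x : 'F_p) : ((val x)%:R : 'F_p) = x.
Proof. by apply: val_inj => /=; rewrite val_Fp_nat // modn_small // Fp_lt. Qed.


Lemma etaF_nat m : eF (m%:R : 'F_p) = eta_ R p ^+ m.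
Proof. by rewrite /etaF /= val_Fp_nat // (prim_expr_mod eta_prim). Qed.

Lemma etaFD x y : eF (x + y) = eF x * eF y.
Proof. by rewrite -[x]Fp_val -[y]Fp_val -natrD !etaF_nat exprD. Qed.

Lemma etaF0 : eF (0 : 'F_p) = 1.
Proof. by rewrite -[0]/(0%:R) etaF_nat expr0. Qed.

Lemma etaF1 : eF (1 : 'F_p) = eta_ R p.
Proof. by rewrite -[1]/(1%:R) etaF_nat expr1. Qed.

Lemma etaF_neq0 x : eF x != 0 :> C.
Proof. exact: expi_neq0. Qed.

Lemma etaF_conj x : Num.conj (eF x) = eF (- x).
Proof.
apply: (mulIf (etaF_neq0 x)); rewrite expi_conjX -etaFD addNr etaF0 //.
Qed.

Lemma etaB x y : eF (x - y) = eF x * Num.conj (eF y).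
Proof. by rewrite etaF_conj etaFD. Qed.

Lemma sum_etaF (b : 'F_p) :
  \sum_(n : 'F_p) eF (b * n) = if b == 0 then p%:R else 0.
Proof.
case: eqP => [->|/eqP b0].
  under eq_bigr do rewrite mul0r etaF0.
  by rewrite sumr_const card_Fp.
have -> : \sum_(n : 'F_p) eF (b * n) = \sum_(n : 'F_p) eF n.
  by symmetry; rewrite (reindex_inj (mulfI b0)).
set S := \sum_n _.
have e1 : eta_ R p - 1 != 0.
  rewrite subr_eq0 -[X in X != _]expr1 -(prim_order_dvd eta_prim) ; apply/negP => /dvdn_leq; have := p_gt4; lia.
apply: (mulIf e1); rewrite mul0r mulrBr mulr1; apply/eqP; rewrite subr_eq0; apply/eqP; rewrite -etaF1 /S mulr_suml.
under eq_bigr do rewrite -etaFD.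
by symmetry; rewrite (reindex_inj (addIr 1)).
Qed.

Lemma a_neq0 : a != 0.
Proof. by rewrite (prim_root_eq0 pa); have := p_gt4; lia. Qed.

Lemma Fermat (j : 'F_p) : j != 0 -> j ^+ p.-1 = 1.
Proof.
move=> j0; apply: (mulIf j0); rewrite mul1r -exprSr prednK ?prime_gt0 //.
by have := expf_card j; rewrite card_Fp.
Qed.

Lemma dlogP (j : 'F_p) : j != 0 -> (dlog a j < p.-1)%N /\ a ^+ dlog a j = j.
Proof.
move=> j0; have [i ->] := prim_rootP pa (Fermat _ j0).
have hs : has (fun m => a ^+ m == a ^+ i) (iota 0 p.-1).
  by apply/hasP; exists (val i); rewrite ?mem_iota //=.
have := nth_find 0 hs; rewrite has_find size_iota in hs.
rewrite /dlog; rewrite nth_iota // add0n => /eqP ->; split=> //.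
Qed.

Lemma dlog_exp m : (m < p.-1)%N -> dlog a (a ^+ m) = m.
Proof.
move=> mp; have [dl e] := dlogP _ (expf_neq0 m a_neq0).
by move/eqP: e; rewrite (eq_prim_root_expr pa) !modn_small // => /eqP.
Qed.

Lemma sum_dlog (F : nat -> C) :
  \sum_(j : 'F_p | j != 0) F (dlog a j) = \sum_(m < p.-1) F m.
Proof.
have pm : (0 < p.-1)%N by have := p_gt4; lia.
pose h0 : 'I_(p.-1) := Ordinal pm.
rewrite (reindex (fun m : 'I_(p.-1) => a ^+ m)) /=.
  by apply: eq_big => [m|m _]; rewrite ?expf_neq0 ?a_neq0 // dlog_exp.
exists (fun j => insubd h0 (dlog a j)) => [m _|j].
  apply: val_inj; rewrite /= insubdK; first exact: dlog_exp.
  by rewrite unfold_in /= (dlog_exp _ (ltn_ord m)).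
rewrite inE => j0; have [dl e] := dlogP _ j0.
by rewrite insubdK.
Qed.

Lemma two_neq0 : (2%:R : 'F_p) != 0.
Proof.
apply/eqP => e; have := val_Fp_nat pr 2; rewrite e /= modn_small; first by [].
exact: leq_trans _ p_gt4.
Qed.

Lemma h2 : h * 2%:R = 1.
Proof. exact: mulVf two_neq0. Qed.

Lemma c2 : c ^+ 2 = -1.
Proof.
have k4 : (p.-1 %/ 4 * 4 = p.-1)%N by have := p_gt4; lia.
set w := c ^+ 2.
have w2 : w ^+ 2 = 1.
  by rewrite /w -!exprM (_ : (_ * (2 * 2) = p.-1)%N) ?(prim_expr_order pa) //; lia.
have w1 : w != 1.
  rewrite /w -exprM -(prim_order_dvd pa); apply/negP => /dvdn_leq.
  by have := p_gt4; lia.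
have : (w - 1) * (w + 1) = 0 by rewrite -subr_sqr expr1n w2 subrr.
move/eqP; rewrite mulf_eq0 subr_eq0 (negbTE w1) /= addr_eq0 => /eqP //.
Qed.

Lemma c_neq0 : c != 0.
Proof. by apply: expf_neq0; apply: a_neq0. Qed.

Lemma lc (X Y q1 q2 : 'F_p) :
  X - Y = q1 * (c ^+ 2 + 1) + q2 * (h * 2%:R - 1) -> X = Y.
Proof. by rewrite c2 h2 addNr subrr !mulr0 addr0 => /eqP; rewrite subr_eq0 => /eqP. Qed.


Lemma phi0E (x : 'I_p) n : (x == 0 :> nat) -> phi R a x n = K0 * eF (h * c * n ^+ 2).
Proof. by move=> x0; rewrite /phi x0. Qed.

Lemma phiE (x : 'I_p) n : (x != 0 :> nat) ->
  phi R a x n = K * \sum_(j : 'F_p | j != 0) th ^+ (x * dlog a j) * eF (E j n).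
Proof. by move=> x0; rewrite /phi (negbTE x0). Qed.

Lemma cross j j' :
  \sum_(n : 'F_p) eF (E j n) * Num.conj (eF (E j' n)) = (j == j')%:R * p%:R.
Proof.
under eq_bigr do rewrite -etaB.
have e n : E j n - E j' n = c * (j ^+ 2 - j' ^+ 2) + (2%:R * c * (j' - j)) * n by ring.
under eq_bigr do rewrite e etaFD.
rewrite -mulr_sumr sum_etaF.
case: (j =P j') => [<-|/eqP jj].
  by rewrite !subrr !mulr0 eqxx etaF0 !mul1r.
rewrite mulf_eq0 mulf_eq0 (negbTE two_neq0) (negbTE c_neq0) subr_eq0 eq_sym (negbTE jj).
by rewrite !mulr0 mul0r.
Qed.

Lemma th_conj (y d : nat) : (y <= p.-1)%N ->
  Num.conj (th ^+ (y * d)) = th ^+ ((p.-1 - y) * d).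
Proof.
move=> yp; rewrite /theta_; apply: (mulIf (expi_neq0 _ (2 * pi / (p.-1)%:R) (y * d))).
rewrite expi_conjX -exprD -mulnDl subnK // exprM.
by have := prim_expr_order (theta_prim); rewrite /theta_ => ->; rewrite expr1n.
Qed.

Lemma chi_orth (x y : 'I_p) : x != 0 :> nat -> y != 0 :> nat ->
  \sum_(j : 'F_p | j != 0) th ^+ (x * dlog a j) * Num.conj (th ^+ (y * dlog a j))
   = (x == y)%:R * (p.-1)%:R.
Proof.
move=> x0 y0.
have yp : (y <= p.-1)%N by have := ltn_ord y; lia.
have xp : (x <= p.-1)%N by have := ltn_ord x; lia.
under eq_bigr do rewrite th_conj // -exprD -mulnDl.
rewrite (sum_dlog (fun d => th ^+ ((x + (p.-1 - y)) * d))).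
rewrite sum_prim ?theta_prim //.
case: (x =P y) => [->|/eqP xy].
  by rewrite subnKC // dvdnn mul1r.
case: ifP => [|_]; last by rewrite mul0r.
have [xy'|xy'] := ltnP x y.
  move/dvdn_leq; have := ltn_ord x; lia.
have -> : (x + (p.-1 - y) = p.-1 + (x - y))%N by lia.
rewrite dvdn_addr // => /dvdn_leq.
have := ltn_ord x; move: xy; rewrite -val_eqE /=; lia.
Qed.

Lemma sum_delta (F : 'F_p -> C) (P : C) (j : 'F_p) : j != 0 ->
  \sum_(j' : 'F_p | j' != 0) F j' * ((j == j')%:R * P) = F j * P.
Proof.
move=> j0; rewrite (bigD1 j) //= eqxx mul1r big1 ?addr0 //.
by move=> j' /andP[_ jj]; rewrite eq_sym (negbTE jj) mul0r mulr0.
Qed.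

Lemma orth_nz (x y : 'I_p) : x != 0 :> nat -> y != 0 :> nat ->
  inner (phi R a x) (phi R a y) = (x == y)%:R.
Proof.
move=> x0 y0; rewrite /inner.
under eq_bigr => n _ do rewrite (phiE x n x0) (phiE y n y0) conjM conj_sum mulrACA mulr_suml.
rewrite -mulr_sumr.
under eq_bigr => n _ do under eq_bigr => j _ do rewrite mulr_sumr.
rewrite exchange_big /=.
under eq_bigr => j _ do rewrite exchange_big /=.
under eq_bigr => j _ do under eq_bigr => j' _ do under eq_bigr => n _ do
  rewrite conjM mulrACA.
under eq_bigr => j _ do under eq_bigr => j' _ do rewrite -mulr_sumr cross.
have pm : (0 < p * p.-1)%N by have := p_gt4; rewrite muln_gt0; lia.
under eq_bigr => j j0 do rewrite (sum_delta _ _ _ j0).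
rewrite -mulr_suml chi_orth // Kconj // natrM.
case: (x == y); rewrite ?mul0r ?mulr0 // !mul1r [X in _ * X]mulrC mulVf //.
by rewrite -natrM pnatr_eq0 -lt0n.
Qed.

Lemma conjK0 : Num.conj (0 : C) = 0 :> C.
Proof. exact: rmorph0. Qed.

Lemma eF_norm e : eF e * Num.conj (eF e) = 1.
Proof. by rewrite etaF_conj -etaFD subrr etaF0. Qed.

Lemma inner_sym (f g : 'F_p -> C) : inner f g = Num.conj (inner g f).
Proof.
rewrite /inner conj_sum; apply: eq_bigr => n _.
by rewrite conjM conjK mulrC.
Qed.

Lemma orth_00 (x y : 'I_p) : x == 0 :> nat -> y == 0 :> nat ->
  inner (phi R a x) (phi R a y) = (x == y)%:R.
Proof.
move=> x0 y0; have -> : x == y by rewrite -val_eqE /= (eqP x0) (eqP y0).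
rewrite /inner.
under eq_bigr => n _ do rewrite (phi0E x n x0) (phi0E y n y0) conjM mulrACA eF_norm mulr1.
by rewrite sumr_const card_Fp // -[_ *+ p]mulr_natr Kconj ?prime_gt0 // mulVf // pnatr_eq0 -lt0n prime_gt0.
Qed.

Lemma orth_0n (x y : 'I_p) : x == 0 :> nat -> y != 0 :> nat ->
  inner (phi R a x) (phi R a y) = 0.
Proof.
move=> x0 y0; rewrite /inner.
under eq_bigr => n _ do rewrite (phi0E x n x0) (phiE y n y0) conjM mulrACA conj_sum mulr_sumr.
rewrite -mulr_sumr exchange_big /=.
under eq_bigr => j _ do under eq_bigr => n _ do rewrite conjM mulrCA -etaB.
have e j n : h * c * n ^+ 2 - E j n = - (c * j ^+ 2) + (2%:R * c * j) * n.
  apply: (lc _ _ 0 (c * n ^+ 2)); ring.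
under eq_bigr => j _ do under eq_bigr => n _ do rewrite e etaFD.
under eq_bigr => j j0 do rewrite -mulr_sumr -mulr_sumr sum_etaF mulf_eq0 mulf_eq0 (negbTE two_neq0) (negbTE c_neq0) (negbTE j0) !mulr0.
by rewrite big1 ?mulr0.
Qed.

Lemma orth (x y : 'I_p) : inner (phi R a x) (phi R a y) = (x == y)%:R.
Proof.
have [x0|x0] := boolP (x == 0 :> nat); have [y0|y0] := boolP (y == 0 :> nat).
- exact: orth_00.
- rewrite orth_0n //; suff -> : (x == y) = false by [].
  by apply/negP => /eqP xy; move: y0; rewrite -xy x0.
- rewrite inner_sym orth_0n //; suff -> : (x == y) = false by rewrite conjK0.
  by apply/negP => /eqP xy; move: x0; rewrite xy y0.
- exact: orth_nz.
Qed.

Local Notation G := (\sum_(n : 'F_p) eF (h * c * n ^+ 2)).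

Lemma G_lin (m : 'F_p) : \sum_(n : 'F_p) eF (m * n + h * c * n ^+ 2) = eF (h * c * m ^+ 2) * G.
Proof.
have e n : m * n + h * c * n ^+ 2 = h * c * (n - c * m) ^+ 2 + h * c * m ^+ 2.
  by apply: (lc _ _ (2%:R * h * m * n - h * c * m ^+ 2) (- (m * n))); ring.
under eq_bigr do rewrite e etaFD.
rewrite -mulr_suml mulrC; congr (_ * _).
by rewrite [RHS](reindex_inj (addIr (- (c * m)))).
Qed.

Lemma inner_n (m j : 'F_p) :
  \sum_(n : 'F_p) eF (m * n) * eF (E j n) = eF (c * j ^+ 2 + h * c * (m - 2%:R * c * j) ^+ 2) * G.
Proof.
have e n : m * n + E j n = c * j ^+ 2 + ((m - 2%:R * c * j) * n + h * c * n ^+ 2).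
  by apply: (lc _ _ 0 (- (c * n ^+ 2))); ring.
under eq_bigr do rewrite -etaFD e etaFD.
by rewrite -mulr_sumr G_lin etaFD mulrA.
Qed.

Lemma T_rot (m j : 'F_p) :
  c * (- c * j) ^+ 2 + h * c * (m - 2%:R * c * (- c * j)) ^+ 2 = E j m.
Proof.
apply: (lc _ _ (c * j ^+ 2 + 4%:R * h * c * j * (m - 2%:R * j) + 4%:R * h * c * (c ^+ 2 + 1) * j ^+ 2)
   (2%:R * c * j ^+ 2 - 2%:R * c * m * j + c * m ^+ 2)); ring.
Qed.

Lemma chi_mul (x : nat) (u v : 'F_p) : u != 0 -> v != 0 ->
  th ^+ (x * dlog a (u * v)) = th ^+ (x * dlog a u) * th ^+ (x * dlog a v).
Proof.
move=> u0 v0.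
have [_ eu] := dlogP u u0; have [_ ev] := dlogP v v0.
have [_ euv] := dlogP (u * v) (mulf_neq0 u0 v0).
have : a ^+ dlog a (u * v) == a ^+ (dlog a u + dlog a v) by rewrite exprD eu ev euv.
rewrite (eq_prim_root_expr pa) => /eqP md.
rewrite -exprD -mulnDr ![(x * _)%N]mulnC !exprM.
by rewrite -(prim_expr_mod theta_prim) md (prim_expr_mod theta_prim).
Qed.

Lemma sum_mul_nz (F : 'F_p -> C) (u : 'F_p) : u != 0 ->
  \sum_(j : 'F_p | j != 0) F j = \sum_(j : 'F_p | j != 0) F (u * j).
Proof.
move=> u0; rewrite (reindex (fun j => u * j)) /=.
  by apply: eq_bigl => j; rewrite mulf_eq0 (negbTE u0).
by exists (fun j => u^-1 * j) => j _; rewrite ?mulKf ?mulVKf.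
Qed.

Lemma eig0 (x : 'I_p) : x == 0 :> nat ->
  DFT (phi R a x) = (fun m => (K0 * G) * phi R a x m).
Proof.
move=> x0; apply: functional_extensionality => m; rewrite /DFT.
under eq_bigr do rewrite (phi0E x _ x0) mulrCA -etaFD.
by rewrite -mulr_sumr G_lin (phi0E x m x0); ring.
Qed.

Lemma negc_neq0 : - c != 0.
Proof. by rewrite oppr_eq0 c_neq0. Qed.

Lemma eig_nz (x : 'I_p) : x != 0 :> nat ->
  DFT (phi R a x) = (fun m => (K0 * G * th ^+ (x * dlog a (- c))) * phi R a x m).
Proof.
move=> x0; apply: functional_extensionality => m; rewrite /DFT.
under eq_bigr do rewrite (phiE x _ x0) mulrCA mulr_sumr.
rewrite -mulr_sumr exchange_big /=.
under eq_bigr => j _ do under eq_bigr => n _ do rewrite mulrCA.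
under eq_bigr do rewrite -mulr_sumr inner_n.
rewrite (sum_mul_nz _ (- c) negc_neq0).
have e : \sum_(j : 'F_p | j != 0)
    th ^+ (x * dlog a (- c * j)) * (eF (c * (- c * j) ^+ 2 + h * c * (m - 2%:R * c * (- c * j)) ^+ 2) * G)
  = (th ^+ (x * dlog a (- c)) * G) * \sum_(j : 'F_p | j != 0) th ^+ (x * dlog a j) * eF (E j m).
  rewrite mulr_sumr; apply: eq_bigr => j j0.
  by rewrite chi_mul ?negc_neq0 // T_rot; ring.
by rewrite e (phiE x m x0); ring.
Qed.

Definition fp (i : 'I_p) : 'F_p := (i : nat)%:R.
Definition gi (x : 'F_p) : 'I_p := Ordinal (Fp_lt x).

Lemma fpK : cancel gi fp.
Proof. by move=> x; rewrite /fp /gi /= Fp_val. Qed.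

Lemma giK : cancel fp gi.
Proof. by move=> i; apply: val_inj; rewrite /= val_Fp_nat // modn_small. Qed.

Lemma sum_fp (F : 'F_p -> C) : \sum_(n : 'F_p) F n = \sum_(i : 'I_p) F (fp i).
Proof.
rewrite (reindex fp) //; exists gi => i _; [exact: giK | exact: fpK].
Qed.

Lemma span (f : 'F_p -> C) : exists c0 : 'I_p -> C,
  f = (fun n => \sum_(x : 'I_p) c0 x * phi R a x n).
Proof.
pose M : 'M[C]_p := \matrix_(x, i) phi R a x (fp i).
pose N : 'M[C]_p := \matrix_(i, y) Num.conj (phi R a y (fp i)).
have MN : M *m N = 1%:M.
  apply/matrixP => x y; rewrite !mxE -orth /inner sum_fp.
  by apply: eq_bigr => i _; rewrite !mxE.
have NM := mulmx1C MN.
exists (fun x => \sum_(i : 'I_p) f (fp i) * Num.conj (phi R a x (fp i))).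
apply: functional_extensionality => n; rewrite -[n]fpK.
set i0 := gi n.
under eq_bigr do rewrite mulr_suml.
rewrite exchange_big /=.
have e i : \sum_(x : 'I_p) f (fp i) * Num.conj (phi R a x (fp i)) * phi R a x (fp i0)
   = f (fp i) * (i == i0)%:R.
  have := congr1 (fun A : 'M[C]_p => A i i0) NM; rewrite !mxE => <-.
  by rewrite mulr_sumr; apply: eq_bigr => x _; rewrite !mxE mulrA.
under eq_bigr do rewrite e.
rewrite (bigD1 i0) //= eqxx mulr1 big1 ?addr0 // => i ii.
by rewrite (negbTE ii) mulr0.
Qed.

End Fp.

Theorem theorem3 (R : realType) (p : nat) (a : 'F_p) :
  prime p -> (p %% 4 = 1)%N -> (p.-1).-primitive_root a ->
  [/\ (* orthonormal *)
      (forall x y : 'I_p, inner (phi R a x) (phi R a y) = (x == y)%:R),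
      (* spanning: a basis of C(F_p) *)
      (forall f : 'F_p -> R[i], exists c : 'I_p -> R[i],
          f = (fun n => \sum_(x : 'I_p) c x * phi R a x n)) &
      (* each phi_x is an eigenvector of F *)
      (forall x : 'I_p, (exists n, phi R a x n != 0) /\
          exists lambda : R[i], DFT (phi R a x) = (fun n => lambda * phi R a x n))].
Proof.
move=> pr p4 pa; split.
- exact: orth.
- exact: span.
- move=> x; split.
    case: (pickP (fun n => phi R a x n != 0)) => [n hn|h0]; first by exists n.
    have := orth R p pr p4 a pa x x; rewrite /inner big1 ?eqxx.
      by move/eqP; rewrite eq_sym oner_eq0.
    by move=> n _; move: (h0 n) => /negbFE/eqP ->; rewrite mul0r.
  have [x0|x0] := boolP (x == 0 :> nat).
    by eexists; apply: eig0.
  by eexists; apply: eig_nz.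
Qed.
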